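(* Let $n\ge 1$, $b\in\mathbb{R}^n$, and let $A\in\mathbb{R}^{n\times n}$ be symmetric with all eigenvalues $\lambda_i$ satisfying $0<\lambda_i<2$, $i=1,\dots,n$. Define $g(x)=x-(Ax-b)$ and $f(x)=g(x)-x=-(Ax-b)$. Let $\bar x_k\in\mathbb{R}^n$, $\bar d_k\in\mathbb{R}^n\setminus\{0\}$ and $\beta_k\in\mathbb{R}$ be arbitrary, and set $$x_{k+1}=\bar x_k+\beta_k\bar d_k,\qquad \hat\beta_k=\frac{\langle \bar d_k,\,g(x_{k+1})-\bar x_k\rangle}{\|\bar d_k\|^2},\qquad \hat x_{k+1}=\bar x_k+\hat\beta_k\bar d_k.$$ Then $$\|f(\hat x_{k+1})\|_{A^{-1}}\le \|f(x_{k+1})\|_{A^{-1}},$$ where $\|x\|_{A^{-1}}=\sqrt{x^\intercal A^{-1}x}$.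
   Context: $\|\cdot\|$ denotes the Euclidean norm on $\mathbb{R}^n$ and $\langle x,y\rangle=x^\intercal y$ the standard inner product. Since $A$ is symmetric positive definite, $\|x\|_{A^{-1}}=\sqrt{x^\intercal A^{-1}x}$ is a norm. In the paper, $\bar x_k$ and $\bar d_k=\bar y_k-\bar x_k$ arise from an Anderson acceleration step, and $\hat\beta_k$ is the value of $\beta$ minimizing $\|\bar x_k+\beta\bar d_k-g(x_{k+1})\|$. *)

(* Defs.v *)
From HB Require Import structures.
From mathcomp Require Import all_boot all_order all_algebra.
Set Implicit Arguments. Unset Strict Implicit. Unset Printing Implicit Defensive.
Import Order.TTheory GRing.Theory Num.Theory.
Local Open Scope ring_scope.

Definition dotv (R : ringType) (n : nat) (x y : 'cV[R]_n) : R := (x^T *m y) 0 0.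

Definition sqnorm (R : ringType) (n : nat) (x : 'cV[R]_n) : R := dotv x x.

Definition normAinv (R : rcfType) (n : nat) (A : 'M[R]_n) (x : 'cV[R]_n) : R :=
  Num.sqrt (dotv x (invmx A *m x)).

Definition gmap (R : ringType) (n : nat) (A : 'M[R]_n) (b x : 'cV[R]_n) : 'cV[R]_n :=
  x - (A *m x - b).
Definition fmap (R : ringType) (n : nat) (A : 'M[R]_n) (b x : 'cV[R]_n) : 'cV[R]_n :=
  gmap A b x - x.

(* Main.v *)
Require Import Defs.
From HB Require Import structures.
From mathcomp Require Import all_boot all_order all_algebra.
From mathcomp Require Import sesquilinear spectral.
From mathcomp Require Import complex.
From mathcomp Require Import ring lra.
Import Order.TTheory GRing.Theory Num.Theory.
Local Open Scope ring_scope.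
Section Dot.
Variable (R : comNzRingType) (n : nat).
Implicit Types (x y z : 'cV[R]_n).
Lemma dotvDr x y z : dotv x (y + z) = dotv x y + dotv x z.
Proof. by rewrite /dotv mulmxDr mxE. Qed.
Lemma dotvDl x y z : dotv (y + z) x = dotv y x + dotv z x.
Proof. by rewrite /dotv linearD /= mulmxDl mxE. Qed.
Lemma dotvZr a x y : dotv x (a *: y) = a * dotv x y.
Proof. by rewrite /dotv -scalemxAr mxE. Qed.
Lemma dotvZl a x y : dotv (a *: x) y = a * dotv x y.
Proof. by rewrite /dotv linearZ /= -scalemxAl mxE. Qed.
Lemma dotvNr x y : dotv x (- y) = - dotv x y.
Proof. by rewrite -scaleN1r dotvZr mulN1r. Qed.
Lemma dotvNl x y : dotv (- x) y = - dotv x y.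
Proof. by rewrite -scaleN1r dotvZl mulN1r. Qed.
Lemma dotvC x y : dotv x y = dotv y x.
Proof.
by rewrite /dotv -[x^T *m y]trmxK trmx_mul trmxK mxE.
Qed.
Lemma dotv_mull (M : 'M[R]_n) x y : dotv (M *m x) y = dotv x (M^T *m y).
Proof. by rewrite /dotv trmx_mul mulmxA. Qed.
End Dot.
Lemma sqnorm_gt0 (R : realFieldType) n (d : 'cV[R]_n) : d != 0 -> 0 < sqnorm d.
Proof.
move=> hd; rewrite /sqnorm /dotv mxE lt_def; apply/andP; split; last first.
  by apply: sumr_ge0 => i _; rewrite mxE -expr2 sqr_ge0.
apply: contra hd => /eqP /psumr_eq0P H.
have {}H : forall i, d^T 0 i * d i 0 = 0.
  by move=> i; apply: H => // k _; rewrite mxE -expr2 sqr_ge0.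
apply/eqP/matrixP => i j; rewrite (ord1 j) mxE.
by have /eqP := H i; rewrite mxE -expr2 sqrf_eq0 => /eqP.
Qed.

Lemma main_real (R : rcfType) (n : nat) (A : 'M[R]_n) (b : 'cV[R]_n)
  (hsym : A^T = A) (hu : A \in unitmx)
  (xbar d : 'cV[R]_n) (hd : d != 0) (beta : R)
  (hq : dotv d (A *m d) <= 2 * sqnorm d) :
  let x1 := xbar + beta *: d in
  let betahat := dotv d (gmap A b x1 - xbar) / sqnorm d in
  let xhat := xbar + betahat *: d in
  normAinv A (fmap A b xhat) <= normAinv A (fmap A b x1).
Proof.
cbv zeta.
set x1 := xbar + beta *: d.
set betahat := dotv d (gmap A b x1 - xbar) / sqnorm d.
set xhat := xbar + betahat *: d.
set r0 := b - A *m xbar.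
have fE t : fmap A b (xbar + t *: d) = r0 - t *: (A *m d).
  rewrite /fmap /gmap /r0 mulmxDr -scalemxAr.
  set Ax := A *m xbar; set Ad := A *m d.
  by apply/matrixP => i j; rewrite !mxE; ring.
set c := dotv r0 (invmx A *m r0).
set p := dotv d r0.
set a := dotv d (A *m d).
set s := sqnorm d.
have qE t : dotv (fmap A b (xbar + t *: d)) (invmx A *m fmap A b (xbar + t *: d))
    = c - 2 * t * p + t ^+ 2 * a.
  rewrite fE mulmxBr -scalemxAr mulKmx //.
  rewrite dotvDl !dotvNl !dotvDr !dotvNr !dotvZl !dotvZr.
  have e1 : dotv (A *m d) (invmx A *m r0) = p.
    by rewrite dotv_mull hsym mulKVmx.
  have e2 : dotv r0 d = p by rewrite dotvC.
  have e3 : dotv (A *m d) d = a by rewrite dotvC.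
  rewrite e1 e2 e3 -/c; ring.
have gE : gmap A b x1 - xbar = r0 - beta *: (A *m d) + beta *: d.
  rewrite /gmap /x1 /r0 mulmxDr -scalemxAr.
  set Ax := A *m xbar; set Ad := A *m d.
  by apply/matrixP => i j; rewrite !mxE; ring.
have hs : 0 < s by apply: sqnorm_gt0.
have bhE : betahat * s = beta * s + p - beta * a.
  rewrite /betahat gE dotvDr dotvDr dotvNr !dotvZr -/p -/a.
  rewrite -[dotv d d]/(sqnorm d) -/s mulfVK ?gt_eqF //.
  ring.
rewrite /normAinv /xhat /x1 !qE; apply: ler_wsqrtr.
have key : (c - 2 * betahat * p + betahat ^+ 2 * a) - (c - 2 * beta * p + beta ^+ 2 * a)
   = (betahat - beta) ^+ 2 * (a - 2 * s).
  have hp : p = (betahat - beta) * s + beta * a by rewrite mulrBl bhE; ring.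
  rewrite hp; ring.
rewrite -subr_le0 key; apply: mulr_ge0_le0; first exact: sqr_ge0.
by rewrite subr_le0.
Qed.
Lemma unit_of_eig (R : fieldType) n (A : 'M[R]_n) :
  ~~ eigenvalue A 0 -> A \in unitmx.
Proof.
move=> h; rewrite -row_free_unit -kermx_eq0.
by move: h; rewrite /eigenvalue /eigenspace raddf0 subr0 negbK.
Qed.

Section Psd.
Variable (R : rcfType) (n : nat) (A : 'M[R]_n).
Hypothesis hsym : A^T = A.
Hypothesis heig : forall a : R, eigenvalue A a -> a < 2.
Local Notation toC := (real_complex R).

Lemma psd2 (d : 'cV[R]_n) : dotv d (A *m d) <= 2 * sqnorm d.
Proof.
pose Ac := map_mx toC A.
have Areal : Ac \is a realmx.
  by apply/mxOverP => i j; rewrite mxE; apply/complex_realP; eexists.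
have Asym : Ac \is symmetricmx.
  rewrite is_hermitianmxE expr0 scale1r; apply/eqP/matrixP => i j.
  by rewrite /Ac !mxE /= -{1}hsym mxE.
have herm := realsym_hermsym Asym Areal.
have /orthomx_spectralP Aeq := hermitian_normalmx herm.
have Dreal := hermitian_spectral_diag_real herm.
have Pu := spectral_unitarymx Ac.
have Punit := spectral_unit Ac.
set P := spectralmx Ac in Aeq Pu Punit.
set D := spectral_diag Ac in Aeq Dreal.
have Dle : forall i, D 0 i <= 2.
  move=> i.
  have [k Dk] : exists k, D 0 i = toC k.
    by apply/complex_realP; move/mxOverP: Dreal; apply.
  have eig : eigenvalue Ac (D 0 i).
    apply/eigenvalueP; exists (row i P).
      rewrite -row_mul Aeq !mulmxA mulmxV // mul1mx mul_diag_mx.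
      by apply/rowP => j; rewrite !mxE.
    rewrite rowE mulmx_free_eq0 ?row_free_unit //.
    apply/negP => /eqP/matrixP/(_ 0 i); rewrite !mxE !eqxx /= => /eqP.
    by rewrite oner_eq0.
  rewrite Dk in eig; rewrite Dk.
  have := heig k; rewrite -(eigenvalue_map toC) -/Ac => /(_ eig) hk.
  by rewrite -[2](rmorph_nat toC) lecR ltW.
pose dc := map_mx toC d.
have mapdot : forall x y : 'cV[R]_n,
    toC (dotv x y) = dotv (map_mx toC x) (map_mx toC y).
  move=> x y; rewrite /dotv !mxE rmorph_sum; apply: eq_bigr => k _; rewrite !mxE rmorphM //.
have dcconj : map_mx Num.conj dc = dc.
  apply/matrixP => i j; rewrite !mxE; apply: conj_Creal.
  by apply/complex_realP; eexists.
suff : 0 <= toC (2 * sqnorm d - dotv d (A *m d)) by rewrite ler0c subr_ge0.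
rewrite rmorphB rmorphM rmorph_nat /sqnorm /= !mapdot map_mxM -/Ac -/dc.
pose w := P *m dc.
have hw : (map_mx Num.conj w)^T = dc^T *m map_mx Num.conj (P^T).
  by rewrite /w (map_mxM Num.conj) dcconj trmx_mul; congr (_ *m _); apply: map_trmx.
have h1 : dotv dc dc = \sum_i (w i 0)^* * w i 0.
  rewrite /dotv -[dc^T]mulmx1 -(mulVmx Punit) invmx_unitary //.
  rewrite mulmxA -hw -mulmxA -/w mxE; apply: eq_bigr => i _; rewrite !mxE.
  done.
have h2 : dotv dc (Ac *m dc) = \sum_i (w i 0)^* * D 0 i * w i 0.
  rewrite /dotv Aeq invmx_unitary // !mulmxA -hw -mulmxA -/w.
  rewrite mul_mx_diag mxE; apply: eq_bigr => i _; rewrite !mxE.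
  done.
rewrite h1 h2 mulr_sumr -sumrB; apply: sumr_ge0 => i _.
have -> : 2 * ((w i 0)^* * w i 0) - (w i 0)^* * D 0 i * w i 0
    = ((w i 0) * (w i 0)^*) * (2 - D 0 i) by ring.
by apply: mulr_ge0; [exact: mul_conjC_ge0 | rewrite subr_ge0 Dle].
Qed.
End Psd.

Theorem theorem2 (R : rcfType) (n : nat) (hn : (1 <= n)%N)
  (A : 'M[R]_n) (b : 'cV[R]_n)
  (hsym : A^T = A)
  (heig : forall a : R, eigenvalue A a -> 0 < a < 2)
  (xbar dbar : 'cV[R]_n) (hd : dbar != 0) (beta : R) :
  let x1 := xbar + beta *: dbar in
  let betahat := dotv dbar (gmap A b x1 - xbar) / sqnorm dbar in
  let xhat := xbar + betahat *: dbar in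
  normAinv A (fmap A b xhat) <= normAinv A (fmap A b x1).
Proof.
have hu : A \in unitmx.
  by apply: unit_of_eig; apply/negP => /heig; rewrite ltxx.
have hq := @psd2 R n A hsym (fun a h => (andP (heig a h)).2) dbar.
exact: (@main_real R n A b hsym hu xbar dbar hd beta hq).
Qed.
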